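(* Let $\{q_k\}$ be a sequence of generalized quadratic forms on $\mathbb{R}^n$. Then: (i) some subsequence of $\{q_k\}$ epi-converges to a function $q\not\equiv\infty$; (ii) if $\{q_k\}$ epi-converges to $q$ and there is $r\ge0$ such that $q_k(w)\ge-r\|w\|^2$ for all $w\in\mathbb{R}^n$ and all sufficiently large $k$, then $q$ is a generalized quadratic form and $q(w)\ge-r\|w\|^2$ for all $w\in\mathbb{R}^n$.
   Context: A generalized quadratic form is a function $q=\frac12\langle\cdot,A\cdot\rangle+\delta_L$ with $A$ a symmetric $n\times n$ matrix and $L$ a linear subspace ($\delta_L$ its indicator). Epi-convergence $q_k\to q$: for every $x$, $\liminf q_k(x_k)\ge q(x)$ for every $x_k\to x$, and $\limsup q_k(x_k)\le q(x)$ for some $x_k\to x$ (equivalently, epigraphs converge in the Painlevé–Kuratowski sense). *)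

(* Defs.v *)
From HB Require Import structures.
From mathcomp Require Import all_boot all_order all_algebra.
From mathcomp Require Import all_classical all_reals all_analysis.
Set Implicit Arguments. Unset Strict Implicit. Unset Printing Implicit Defensive.
Import Order.TTheory GRing.Theory Num.Theory.
Import numFieldTopology.Exports numFieldNormedType.Exports.
Local Open Scope classical_set_scope.
Local Open Scope ring_scope.

Section GQF.
Variables (R : realType) (n : nat).

Definition sqnorm (w : 'rV[R]_n) : R := (w *m w^T) 0 0.

Definition is_linear_subspace (L : set 'rV[R]_n) : Prop :=
  L 0 /\ (forall (a : R) (x y : 'rV[R]_n), L x -> L y -> L (a *: x + y)).

Definition gqf (A : 'M[R]_n) (L : set 'rV[R]_n) (x : 'rV[R]_n) : \bar R :=
  if `[< L x >] then ((2%:R)^-1 * (x *m A *m x^T) 0 0)%:E else +oo%E.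

Definition is_gqf (q : 'rV[R]_n -> \bar R) : Prop :=
  exists (A : 'M[R]_n) (L : set 'rV[R]_n),
    A^T = A /\ is_linear_subspace L /\ q = gqf A L.

Definition epi_converges (qs : nat -> 'rV[R]_n -> \bar R)
    (q : 'rV[R]_n -> \bar R) : Prop :=
  forall x : 'rV[R]_n,
    (forall xs : nat -> 'rV[R]_n, xs @ \oo --> x ->
        (q x <= limn_einf (fun k => qs k (xs k)))%E) /\
    (exists2 xs : nat -> 'rV[R]_n, xs @ \oo --> x &
        (limn_esup (fun k => qs k (xs k)) <= q x)%E).
End GQF.

(* Main.v *)
Require Import Defs.
From HB Require Import structures.
From mathcomp Require Import all_boot all_order all_algebra.
From mathcomp Require Import all_classical all_reals all_analysis.
Import Order.TTheory GRing.Theory Num.Theory.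
Import numFieldTopology.Exports numFieldNormedType.Exports.
Local Open Scope classical_set_scope.
Local Open Scope ring_scope.

From mathcomp Require Import ring lra zify.

Lemma le4 (a b c d : nat) : [/\ (a <= a+b+c+d)%N, (b <= a+b+c+d)%N, (c <= a+b+c+d)%N & (d <= a+b+c+d)%N].
Proof. split; lia. Qed.

Section AuxE.
Context {R : realType}.
Local Open Scope ereal_scope.

Lemma ereal_between (x y : \bar R) : x < y -> exists a : R, x < a%:E < y.
Proof.
case: x => [x||]; case: y => [y||] //=.
- rewrite lte_fin => xy; exists ((x + y) / 2)%R; rewrite !lte_fin; apply/andP; split; lra.
- by move=> _; exists (x + 1)%R; rewrite lte_fin ltry andbT; lra.
- by move=> _; exists (y - 1)%R; rewrite lte_fin ltNyr /=; lra.
- by move=> _; exists 0%R; rewrite ltNyr ltry.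
Qed.

Lemma le_by_lt (x y : \bar R) : (forall a : R, a%:E < x -> a%:E <= y) -> x <= y.
Proof.
move=> H; rewrite leNgt; apply/negP => /ereal_between [a /andP[ya ax]].
by have := H a ax; rewrite leNgt ya.
Qed.

Lemma le_by_gt (x y : \bar R) : (forall a : R, y < a%:E -> x <= a%:E) -> x <= y.
Proof.
move=> H; rewrite leNgt; apply/negP => /ereal_between [a /andP[ya ax]].
by have := H a ya; rewrite leNgt ax.
Qed.

Lemma limn_einf_sup_range (u : (\bar R)^nat) :
  limn_einf u = ereal_sup (range (einfs u)).
Proof. by rewrite limn_einf_lim; apply/cvg_lim => //; exact: cvg_einfs_sup. Qed.

Lemma limn_esup_inf_range (u : (\bar R)^nat) :
  limn_esup u = ereal_inf (range (esups u)).
Proof. by rewrite limn_esup_lim; apply/cvg_lim => //; exact: cvg_esups_inf. Qed.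

Lemma einf_ge (u : (\bar R)^nat) (l : \bar R) :
  (forall a : R, a%:E < l -> \forall k \near \oo, a%:E <= u k) ->
  l <= limn_einf u.
Proof.
move=> H; apply: le_by_lt => a al; rewrite limn_einf_sup_range.
have [N _ HN] := H a al.
apply: le_ereal_sup_tmp; exists (einfs u N); first by exists N.
apply: le_ereal_inf_tmp => _ [k /= Nk <-]; exact: HN.
Qed.

Lemma esup_le (u : (\bar R)^nat) (l : \bar R) :
  (forall a : R, l < a%:E -> \forall k \near \oo, u k <= a%:E) ->
  limn_esup u <= l.
Proof.
move=> H; apply: le_by_gt => a al; rewrite limn_esup_inf_range.
have [N _ HN] := H a al.
apply: (@le_trans _ _ (esups u N)); first by apply: ereal_inf_lbound; exists N.
apply: ge_ereal_sup => _ [k /= Nk <-]; exact: HN.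
Qed.

Lemma einf_lt (u : (\bar R)^nat) (l : \bar R) (a : R) :
  a%:E < l -> l <= limn_einf u -> \forall k \near \oo, a%:E < u k.
Proof.
move=> al; rewrite limn_einf_sup_range => /(lt_le_trans al) /ereal_sup_gt.
move=> [_ [N _ <-]] aN; exists N => // k /= Nk.
apply: (lt_le_trans aN); apply: ereal_inf_lbound; by exists k.
Qed.

Lemma esup_gt (u : (\bar R)^nat) (l : \bar R) (a : R) :
  l < a%:E -> limn_esup u <= l -> \forall k \near \oo, u k < a%:E.
Proof.
move=> al; rewrite limn_esup_inf_range => /le_lt_trans /(_ al) /ereal_inf_lt.
move=> [_ [N _ <-]] aN; exists N => // k /= Nk.
apply: le_lt_trans aN; apply: ereal_sup_ubound; by exists k.
Qed.

End AuxE.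

Section GQFfacts.
Context {R : realType} {n : nat}.
Local Notation V := 'rV[R]_n.

Definition bil (A : 'M[R]_n) (x y : V) : R := (x *m A *m y^T) 0 0.
Definition Fq (A : 'M[R]_n) (x : V) : R := (2%:R)^-1 * bil A x x.

Lemma bilDl A (a b : R) x y z : bil A (a *: x + b *: y) z = a * bil A x z + b * bil A y z.
Proof. by rewrite /bil !mulmxDl -!scalemxAl !mxE. Qed.

Lemma bilDr A (a b : R) x y z : bil A z (a *: x + b *: y) = a * bil A z x + b * bil A z y.
Proof. rewrite /bil !linearD !linearZ /=. by rewrite !mxE. Qed.

Lemma FqE A (a b : R) x y : Fq A (a *: x + b *: y) =
  a ^+ 2 * Fq A x + a * b * (2%:R^-1 * (bil A x y + bil A y x)) + b ^+ 2 * Fq A y.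
Proof. rewrite /Fq bilDl !bilDr; ring. Qed.

Lemma gqf_in (A : 'M[R]_n) (L : set V) x : L x -> gqf A L x = (Fq A x)%:E.
Proof. by move=> Lx; rewrite /gqf asboolT. Qed.

Lemma gqf_out (A : 'M[R]_n) (L : set V) x : ~ L x -> gqf A L x = +oo%E.
Proof. by move=> Lx; rewrite /gqf asboolF. Qed.

Lemma gqf_dom (A : 'M[R]_n) (L : set V) x : gqf A L x != +oo%E -> L x.
Proof. by rewrite /gqf; case: asboolP. Qed.

Lemma subspace_comb (L : set V) a b x y : is_linear_subspace L -> L x -> L y ->
  L (a *: x + b *: y).
Proof.
rewrite /is_linear_subspace => -[L0 HL] Lx Ly; apply: (HL) => //.
by rewrite -[b *: y]addr0; apply: HL.
Qed.

Lemma Fq0 A : Fq A 0 = 0.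
Proof. by rewrite /Fq /bil !mul0mx mxE mulr0. Qed.

End GQFfacts.

Section Core.
Context {R : realType} {n : nat}.
Local Notation V := 'rV[R]_n.
Variables (qs : nat -> V -> \bar R) (q : V -> \bar R).
Hypothesis Hg : forall k, is_gqf (qs k).
Hypothesis Hepi : epi_converges qs q.

Lemma core_real (c1 c2 d1 d2 a1 b1 a2 b2 : R) (x y : V) (X Y al be : R) :
  0 <= c1 -> 0 <= c2 -> 0 <= d1 -> 0 <= d2 ->
  (forall (A : 'M[R]_n) (u v : V), c1 * Fq A (a1 *: u + b1 *: v) + c2 * Fq A (a2 *: u + b2 *: v)
       = d1 * Fq A u + d2 * Fq A v) ->
  q x = X%:E -> q y = Y%:E ->
  (al%:E < q (a1 *: x + b1 *: y))%E -> (be%:E < q (a2 *: x + b2 *: y))%E ->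
  c1 * al + c2 * be <= d1 * X + d2 * Y.
Proof.
move=> c10 c20 d10 d20 Hid qx qy hal hbe.
have [xs xsx xsup] := (Hepi x).2.
have [ys ysy ysup] := (Hepi y).2.
pose us k := a1 *: xs k + b1 *: ys k.
pose vs k := a2 *: xs k + b2 *: ys k.
have usc : us @ \oo --> a1 *: x + b1 *: y.
  by apply: cvgD; [exact: cvgZl_tmp xsx | exact: cvgZl_tmp ysy].
have vsc : vs @ \oo --> a2 *: x + b2 *: y.
  by apply: cvgD; [exact: cvgZl_tmp xsx | exact: cvgZl_tmp ysy].
have uinf := (Hepi (a1 *: x + b1 *: y)).1 us usc.
have vinf := (Hepi (a2 *: x + b2 *: y)).1 vs vsc.
apply/ler_addgt0Pr => e e0.
pose s := d1 + d2 + 1.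
have s0 : 0 < s by rewrite /s; lra.
pose eps := e / s.
have eps0 : 0 < eps by rewrite /eps divr_gt0.
have epsE : d1 * eps + d2 * eps + eps = e.
  have -> : d1 * eps + d2 * eps + eps = eps * s by rewrite /s; ring.
  by rewrite /eps divfK // gt_eqF.
have qxl : (q x < (X + eps)%:E)%E by rewrite qx lte_fin; lra.
have qyl : (q y < (Y + eps)%:E)%E by rewrite qy lte_fin; lra.
have [N1 _ H1] := esup_gt _ _ _ qxl xsup.
have [N2 _ H2] := esup_gt _ _ _ qyl ysup.
have [N3 _ H3] := einf_lt _ _ _ hal uinf.
have [N4 _ H4] := einf_lt _ _ _ hbe vinf.
pose k := (N1 + N2 + N3 + N4)%N.
have [k1 k2 k3 k4] := le4 N1 N2 N3 N4.
have h1 := H1 k k1.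
have h2 := H2 k k2.
have h3 := H3 k k3.
have h4 := H4 k k4.
move: h1 h2 h3 h4; rewrite /=.
have [A [L [_ [HL ->]]]] := Hg k => h1 h2 h3 h4.
have Lx : L (xs k) by apply: (@gqf_dom _ _ A); by apply/negP => /eqP E; move: h1; rewrite E ltNge leey.
have Ly : L (ys k) by apply: (@gqf_dom _ _ A); by apply/negP => /eqP E; move: h2; rewrite E ltNge leey.
have Lu : L (us k) by apply: subspace_comb.
have Lv : L (vs k) by apply: subspace_comb.
move: h1 h2 h3 h4; rewrite !gqf_in // !lte_fin => h1 h2 h3 h4.
have := Hid A (xs k) (ys k); rewrite -/(us k) -/(vs k) => id.
have i1 : c1 * al <= c1 * Fq A (us k) by apply: ler_wpM2l => //; exact: ltW.
have i2 : c2 * be <= c2 * Fq A (vs k) by apply: ler_wpM2l => //; exact: ltW.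
have i3 : d1 * Fq A (xs k) <= d1 * X + d1 * eps.
  by rewrite -mulrDr; apply: ler_wpM2l => //; exact: ltW.
have i4 : d2 * Fq A (ys k) <= d2 * Y + d2 * eps.
  by rewrite -mulrDr; apply: ler_wpM2l => //; exact: ltW.
lra.
Qed.

End Core.

Section SqCvg.
Context {R : realType} {n : nat}.
Local Notation V := 'rV[R]_n.

Lemma sqnormE (v : V) : sqnorm v = \sum_(j < n) v 0 j * v 0 j.
Proof. by rewrite /sqnorm mxE; apply: eq_bigr => j _; rewrite mxE. Qed.

Lemma sq_cvg (xs : nat -> V) w : xs @ \oo --> w ->
  (fun k => sqnorm (xs k)) @ \oo --> sqnorm w.
Proof.
move=> xw; rewrite sqnormE.
have -> : (fun k => sqnorm (xs k)) = (fun k => \sum_(j < n) xs k 0 j * xs k 0 j).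
  by apply: funext => k; rewrite sqnormE.
apply: (cvg_big add_continuous) => j _.
have cj : (fun k => xs k 0 j) @ \oo --> w 0 j.
  exact: (cvg_comp _ _ xw (@coord_continuous _ _ _ 0 j w)).
exact: cvgM.
Qed.

Lemma sqnorm0 : sqnorm (0 : V) = 0.
Proof. by rewrite sqnormE big1 // => j _; rewrite mxE mulr0. Qed.

End SqCvg.

Section PartII.
Context {R : realType} {n : nat}.
Local Notation V := 'rV[R]_n.
Variables (qs : nat -> V -> \bar R) (q : V -> \bar R) (r : R).
Hypothesis Hg : forall k, is_gqf (qs k).
Hypothesis Hepi : epi_converges qs q.
Hypothesis r0 : 0 <= r.
Hypothesis Hlow : \forall k \near \oo, forall w : V, (- (r * sqnorm w)%:E <= qs k w)%E.

Lemma lowb w : (- (r * sqnorm w)%:E <= q w)%E.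
Proof.
apply: le_by_gt => a qa.
have [xs xsw xsup] := (Hepi w).2.
have [N1 _ H1] := esup_gt _ _ _ qa xsup.
have [N2 _ H2] := Hlow.
pose f k := - (r * sqnorm (xs k)).
have fc : f @ \oo --> - (r * sqnorm w).
  by apply: cvgN; apply: cvgMl_tmp; exact: sq_cvg.
have fl : \forall k \near \oo, f k <= a.
  exists (N1 + N2)%N => // k /= Nk.
  have := H1 k (leq_trans (leq_addr _ _) Nk).
  have := H2 k (leq_trans (leq_addl _ _) Nk) (xs k).
  rewrite /f => h1 h2; have := le_lt_trans h1 h2.
  by rewrite -EFinN lte_fin => /ltW.
have fcv : cvgn f by apply/cvg_ex; exists (- (r * sqnorm w)).
have L := @limr_le _ \oo _ R a f fcv fl.
have E : lim (f @ \oo) = - (r * sqnorm w) by apply: cvg_lim.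
rewrite -EFinN. idtac "A". rewrite lee_fin. idtac "B". rewrite -E. exact: L.
Qed.

Lemma q0 : q 0 = 0%E.
Proof.
apply/eqP; rewrite eq_le; apply/andP; split; last first.
  by have := lowb 0; rewrite sqnorm0 mulr0 oppe0.
apply: le_by_lt => a aq.
have [N _ H] := einf_lt _ _ _ aq ((Hepi 0).1 (fun=> 0) (cvg_cst _)).
have := H N (leqnn N); rewrite /=.
have [A [L [_ [[L0 _] ->]]]] := Hg N.
by rewrite gqf_in // Fq0 lte_fin => /ltW.
Qed.

Lemma q_gtNy w : (-oo < q w)%E.
Proof. by apply: lt_le_trans (lowb w); rewrite -EFinN ltNyr. Qed.

Definition D : set V := fun x => q x != +oo%E.
Definition Qr (x : V) : R := fine (q x).

Lemma QrE x : D x -> q x = (Qr x)%:E.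
Proof.
move=> Dx; rewrite /Qr fineK // fin_numE Dx andbT.
by have := q_gtNy x; rewrite lt_neqAle eq_sym => /andP[].
Qed.

End PartII.

Lemma real_lim {R : realType} (c1 c2 U W S : R) : 0 <= c1 -> 0 <= c2 ->
  (forall e, 0 < e -> c1 * (U - e) + c2 * (W - e) <= S) -> c1 * U + c2 * W <= S.
Proof.
move=> c10 c20 H; apply/ler_addgt0Pr => e e0.
pose s := c1 + c2 + 1.
have s0 : 0 < s by rewrite /s; lra.
pose e' := e / s.
have e'0 : 0 < e' by rewrite /e' divr_gt0.
have hE : c1 * e' + c2 * e' + e' = e.
  have -> : c1 * e' + c2 * e' + e' = e' * s by rewrite /s; ring.
  by rewrite /e' divfK // gt_eqF.
have := H e' e'0; rewrite !mulrBr => h; lra.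
Qed.

Lemma comb {R : realType} {n : nat} (a b c d e f : R) (x y : 'rV[R]_n) :
  a *: (c *: x + d *: y) + b *: (e *: x + f *: y) = (a*c + b*e) *: x + (a*d + b*f) *: y.
Proof. by rewrite !scalerDr !scalerA addrACA -!scalerDl. Qed.

Section PartII2.
Context {R : realType} {n : nat}.
Local Notation V := 'rV[R]_n.
Variables (qs : nat -> V -> \bar R) (q : V -> \bar R) (r : R).
Hypothesis Hg : forall k, is_gqf (qs k).
Hypothesis Hepi : epi_converges qs q.
Hypothesis r0 : 0 <= r.
Hypothesis Hlow : \forall k \near \oo, forall w : V, (- (r * sqnorm w)%:E <= qs k w)%E.

Local Notation D := (D q).
Local Notation Qr := (Qr q).
Local Notation QrE := (QrE qs q r Hepi Hlow).
Local Notation lowb := (lowb qs q r Hepi Hlow).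

Section C.
Variables (c1 c2 d1 d2 a1 b1 a2 b2 : R).
Hypotheses (c10 : 0 <= c1) (c20 : 0 <= c2) (d10 : 0 <= d1) (d20 : 0 <= d2).
Hypothesis Hid : forall (A : 'M[R]_n) (u v : V),
  c1 * Fq A (a1 *: u + b1 *: v) + c2 * Fq A (a2 *: u + b2 *: v)
       = d1 * Fq A u + d2 * Fq A v.

Lemma core_fin x y : D x -> D y -> D (a1 *: x + b1 *: y) -> D (a2 *: x + b2 *: y) ->
  c1 * Qr (a1 *: x + b1 *: y) + c2 * Qr (a2 *: x + b2 *: y) <= d1 * Qr x + d2 * Qr y.
Proof.
move=> Dx Dy Du Dv; apply: real_lim => // e e0.
apply: (@core_real R n qs q Hg Hepi c1 c2 d1 d2 a1 b1 a2 b2 x y (Qr x) (Qr y)) => //.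
- exact: QrE.
- exact: QrE.
- by rewrite (QrE _ Du) lte_fin; lra.
- by rewrite (QrE _ Dv) lte_fin; lra.
Qed.

Lemma core_dom1 x y : 0 < c1 -> D x -> D y -> D (a1 *: x + b1 *: y).
Proof.
move=> c1p Dx Dy; apply/negP => /eqP hu.
set v := a2 *: x + b2 *: y.
pose be := - (r * sqnorm v) - 1.
have hbe : (be%:E < q v)%E.
  apply: lt_le_trans (lowb v); rewrite -EFinN lte_fin /be; lra.
pose S := d1 * Qr x + d2 * Qr y.
pose al := (S - c2 * be) / c1 + 1.
have hal : (al%:E < q (a1 *: x + b1 *: y))%E by rewrite hu ltry.
have := @core_real R n qs q Hg Hepi c1 c2 d1 d2 a1 b1 a2 b2 x y (Qr x) (Qr y) al be
  c10 c20 d10 d20 Hid (QrE _ Dx) (QrE _ Dy) hal hbe.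
have -> : c1 * al = S - c2 * be + c1.
  by rewrite /al mulrDr mulr1 mulrC divfK // gt_eqF.
rewrite -/S; lra.
Qed.

Lemma core_dom2 x y : 0 < c2 -> D x -> D y -> D (a2 *: x + b2 *: y).
Proof.
move=> c2p Dx Dy; apply/negP => /eqP hv.
set u := a1 *: x + b1 *: y.
pose al := - (r * sqnorm u) - 1.
have hal : (al%:E < q u)%E.
  apply: lt_le_trans (lowb u); rewrite -EFinN lte_fin /al; lra.
pose S := d1 * Qr x + d2 * Qr y.
pose be := (S - c1 * al) / c2 + 1.
have hbe : (be%:E < q (a2 *: x + b2 *: y))%E by rewrite hv ltry.
have := @core_real R n qs q Hg Hepi c1 c2 d1 d2 a1 b1 a2 b2 x y (Qr x) (Qr y) al be
  c10 c20 d10 d20 Hid (QrE _ Dx) (QrE _ Dy) hal hbe.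
have -> : c2 * be = S - c1 * al + c2.
  by rewrite /be mulrDr mulr1 mulrC divfK // gt_eqF.
rewrite -/S; lra.
Qed.

End C.

Lemma Id1 (t : R) (A : 'M[R]_n) (u v : V) :
  1 * Fq A (1 *: u + t *: v) + t * Fq A (1 *: u + (-1) *: v) =
  (1 + t) * Fq A u + t * (1 + t) * Fq A v.
Proof. rewrite !FqE; ring. Qed.

Lemma Id2 (t : R) (A : 'M[R]_n) (u v : V) : 0 <= t ->
  (1 + t) * Fq A ((1 + t)^-1 *: u + (t / (1 + t)) *: v) +
  t * (1 + t) * Fq A ((1 + t)^-1 *: u + (- (1 + t)^-1) *: v) =
  1 * Fq A u + t * Fq A v.
Proof.
move=> t0; have h : 1 + t != 0 by rewrite gt_eqF //; lra.
rewrite !FqE; field; exact: h.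
Qed.

End PartII2.

Section PartII3.
Context {R : realType} {n : nat}.
Local Notation V := 'rV[R]_n.
Variables (qs : nat -> V -> \bar R) (q : V -> \bar R) (r : R).
Hypothesis Hg : forall k, is_gqf (qs k).
Hypothesis Hepi : epi_converges qs q.
Hypothesis Hlow : \forall k \near \oo, forall w : V, (- (r * sqnorm w)%:E <= qs k w)%E.

Local Notation D := (D q).
Local Notation Qr := (Qr q).
Local Notation cdom1 := (core_dom1 qs q r Hg Hepi Hlow).
Local Notation cdom2 := (core_dom2 qs q r Hg Hepi Hlow).
Local Notation cfin := (core_fin qs q r Hg Hepi Hlow).

Lemma D0 : D 0.
Proof. by rewrite /D (q0 qs q r Hg Hepi Hlow). Qed.

Lemma Dsub : is_linear_subspace D.
Proof.
split; first exact: D0.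
move=> a x y Dx Dy.
have t1 : (0:R) <= 1 by [].
case: (lerP 0 a) => a0.
  have := cdom1 1 a (1 + a) (a * (1 + a)) 1 a 1 (-1) t1 a0 ltac:(lra)
    ltac:(nra) (Id1 a) y x ltr01 Dy Dx.
  by rewrite scale1r addrC.
have Dnx : D (- x).
  have := cdom2 1 1 (1 + 1) (1 * (1 + 1)) 1 1 1 (-1) t1 t1 ltac:(lra)
    ltac:(lra) (Id1 1) 0 x ltr01 D0 Dx.
  by rewrite scaler0 add0r scaleN1r.
have := cdom1 1 (- a) (1 - a) (- a * (1 - a)) 1 (- a) 1 (-1) t1 ltac:(lra)
    ltac:(lra) ltac:(nra) (Id1 (- a)) y (- x) ltr01 Dy Dnx.
by rewrite scale1r scaleNr scalerN opprK addrC.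
Qed.

Lemma Dcomb a b x y : D x -> D y -> D (a *: x + b *: y).
Proof. exact: subspace_comb Dsub. Qed.

Lemma Deq x y t : 0 <= t -> D x -> D y ->
  Qr (x + t *: y) + t * Qr (x - y) = (1 + t) * Qr x + t * (1 + t) * Qr y.
Proof.
move=> t0 Dx Dy.
have t1 : (0:R) <= 1 by [].
set u := 1 *: x + t *: y.
set v := 1 *: x + (-1) *: y.
have Du : D u by exact: Dcomb.
have Dv : D v by exact: Dcomb.
have le1 := cfin 1 t (1 + t) (t * (1 + t)) 1 t 1 (-1) t1 t0 ltac:(lra)
    ltac:(nra) (Id1 t) x y Dx Dy Du Dv.
have h : 1 + t != 0 by rewrite gt_eqF //; lra.
have ex : (1 + t)^-1 *: u + (t / (1 + t)) *: v = x.
  rewrite /u /v comb.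
  have -> : (1 + t)^-1 * 1 + t / (1 + t) * 1 = 1 by field.
  have -> : (1 + t)^-1 * t + t / (1 + t) * (-1) = 0 by field.
  by rewrite scale1r scale0r addr0.
have ey : (1 + t)^-1 *: u + (- (1 + t)^-1) *: v = y.
  rewrite /u /v comb.
  have -> : (1 + t)^-1 * 1 + - (1 + t)^-1 * 1 = 0 by field.
  have -> : (1 + t)^-1 * t + - (1 + t)^-1 * (-1) = 1 by field.
  by rewrite scale1r scale0r add0r.
have le2 := cfin (1 + t) (t * (1 + t)) 1 t ((1 + t)^-1) (t / (1 + t))
    ((1 + t)^-1) (- (1 + t)^-1) ltac:(lra) ltac:(nra) t1 t0
    (fun A u v => Id2 t A u v t0) u v Du Dv ltac:(by rewrite ex) ltac:(by rewrite ey).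
move: le1 le2; rewrite ex ey /u /v scale1r scaleN1r => le1 le2.
lra.
Qed.

End PartII3.

Ltac fld := field; rewrite ?pnatr_eq0 //.

Section Alg.
Context {R : realType} {n : nat}.
Local Notation V := 'rV[R]_n.
Variable G : V -> R.
Hypothesis G3 : forall (x y : V) (t : R), 0 <= t ->
  G (x + t *: y) + t * G (x - y) = (1 + t) * G x + t * (1 + t) * G y.

Lemma G0 : G 0 = 0.
Proof. have := G3 0 0 1 ler01; rewrite scaler0 !addr0 subr0 => h; lra. Qed.

Lemma GN y : G (- y) = G y.
Proof. have := G3 0 y 1 ler01; rewrite scale1r add0r sub0r G0 => h; lra. Qed.

Lemma Gpar x y : G (x + y) + G (x - y) = 2 * G x + 2 * G y.
Proof. have := G3 x y 1 ler01; rewrite scale1r => h; lra. Qed.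

Definition B x y := (G (x + y) - G x - G y) / 2.

Lemma Gexp x y t : G (x + t *: y) = G x + 2 * t * B x y + t ^+ 2 * G y.
Proof.
have Gm : G (x - y) = 2 * G x + 2 * G y - G (x + y) by have := Gpar x y; lra.
case: (lerP 0 t) => t0.
  have := G3 x y t t0; rewrite Gm /B => h.
  rewrite -[G (x + t *: y)](addrK (t * (2 * G x + 2 * G y - G (x + y)))) h.
  fld.
have t0' : 0 <= - t by rewrite oppr_ge0 ltW.
have := G3 x (- y) (- t) t0'; rewrite scaleNr scalerN !opprK GN /B => h.
rewrite -[G (x + t *: y)](addrK (- t * G (x + y))) h.
fld.
Qed.

Lemma GZ t y : G (t *: y) = t ^+ 2 * G y.
Proof. have := Gexp 0 y t; rewrite add0r => ->; rewrite /B !add0r G0 subr0 subrr mul0r mulr0; lra. Qed.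

Lemma BZ x y t : B x (t *: y) = t * B x y.
Proof. rewrite {1}/B Gexp GZ; fld. Qed.

Lemma BC x y : B x y = B y x.
Proof. by rewrite /B [y + x]addrC; congr (_ / _); ring. Qed.

Lemma B0 y : B 0 y = 0.
Proof. rewrite /B add0r G0; ring. Qed.

Lemma B4 w x : B w x = (G (w + x) - G (w - x)) / 4.
Proof. have := Gpar w x; rewrite /B => h. have -> : G (w - x) = 2 * G w + 2 * G x - G (w + x) by lra. fld. Qed.

Lemma Bpar a b x : B (a + b) x + B (a - b) x = 2 * B a x.
Proof.
rewrite !B4.
have p1 := Gpar (a + x) b.
have p2 := Gpar (a - x) b.
have e1 : a + b + x = a + x + b by rewrite addrAC.
have e2 : a + b - x = a - x + b by rewrite addrAC.
have e3 : a - b + x = a + x - b by rewrite addrAC.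
have e4 : a - b - x = a - x - b by rewrite addrAC.
rewrite e1 e2 e3 e4.
have -> : G (a - x + b) = 2 * G (a - x) + 2 * G b - G (a - x - b) by lra.
have -> : G (a + x + b) = 2 * G (a + x) + 2 * G b - G (a + x - b) by lra.
fld.
Qed.

Lemma BDl y z x : B (y + z) x = B y x + B z x.
Proof.
pose a := 2^-1 *: y + 2^-1 *: z.
pose b := 2^-1 *: y + (- 2^-1) *: z.
have eab : a + b = y.
  rewrite /a /b addrACA -!scalerDl.
  have -> : (2^-1 + 2^-1 : R) = 1 by fld.
  by rewrite subrr scale0r addr0 scale1r.
have eamb : a - b = z.
  rewrite /a /b opprD addrACA -!scalerBl.
  have -> : (2^-1 - - 2^-1 : R) = 1 by fld.
  by rewrite subrr scale0r add0r scale1r.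
have e2a : 2 *: a = y + z.
  by rewrite /a scalerDr !scalerA mulfV ?pnatr_eq0 // !scale1r.
rewrite -{2}eab -{2}eamb Bpar -e2a BC BZ BC.
by [].
Qed.

Lemma BDr x y z : B x (y + z) = B x y + B x z.
Proof. by rewrite BC BDl !(BC x). Qed.

Lemma BZZ a b u v : B (a *: u) (b *: v) = a * b * B u v.
Proof. rewrite BZ BC BZ BC; ring. Qed.

Lemma Bsuml (I : finType) (f : I -> V) y : B (\sum_i f i) y = \sum_i B (f i) y.
Proof.
apply: (big_rec2 (fun a b => B a y = b)); first exact: B0.
by move=> i a b _ <-; rewrite BDl.
Qed.

Lemma GB x : G x = B x x.
Proof.
have := GZ 2 x; rewrite scaler_nat mulr2n /B => ->; fld.
Qed.

Lemma G_quad : exists M : 'M[R]_n, M^T = M /\ forall x, G x = (x *m M *m x^T) 0 0.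
Proof.
exists (\matrix_(i, j) B (delta_mx 0 i) (delta_mx 0 j)); split.
  by apply/matrixP => i j; rewrite !mxE BC.
move=> x.
have L : B x x = \sum_i \sum_j (x 0 i * x 0 j * B (delta_mx 0 i) (delta_mx 0 j)).
  rewrite {1}(row_sum_delta x) Bsuml; apply: eq_bigr => i _.
  rewrite BC {1}(row_sum_delta x) Bsuml; apply: eq_bigr => j _.
  rewrite BZZ BC; ring.
rewrite GB L mxE; apply/esym.
under eq_bigr => j _ do rewrite !mxE mulr_suml.
rewrite exchange_big; apply: eq_bigr => i _; apply: eq_bigr => j _.
rewrite !mxE; lra.
Qed.

End Alg.

Section Proj.
Context {R : realType} {n : nat}.
Variable D : set 'rV[R]_n.
Hypothesis HD : is_linear_subspace D.

Definition good (E : 'M[R]_n) := forall y : 'rV[R]_n, (y <= E)%MS -> D y.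

Lemma good0 : good 0.
Proof. by move=> y; rewrite submx0 => /eqP ->; case: HD. Qed.

Lemma good_add E x : good E -> D x -> good (E + x)%MS.
Proof.
move=> gE Dx y /sub_addsmxP [[u1 u2] ->] /=.
rewrite [u2]mx11_scalar mul_scalar_mx addrC.
case: HD => _ H; apply: H => //; apply: gE; exact: submxMl.
Qed.

Lemma proj_exists : exists P : 'M[R]_n, (forall x, D x -> x *m P = x) /\ (forall x, D (x *m P)).
Proof.
suff [E [gE HE]] : exists E, good E /\ forall x, D x -> (x <= E)%MS.
  exists (pinvmx E *m E); split => x.
    by move=> Dx; rewrite mulmxA mulmxKpV //; exact: HE.
  by apply: gE; rewrite mulmxA submxMl.
have key : forall k E, good E -> (n - \rank E <= k)%N ->
    exists E', good E' /\ forall x, D x -> (x <= E')%MS.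
  elim=> [|k IH] E gE hk.
    exists E; split=> // x _; apply: submx_full.
    by rewrite /row_full eqn_leq rank_leq_col /= -subn_eq0 -leqn0.
  case: (pselect (forall x, D x -> (x <= E)%MS)) => [H|H]; first by exists E.
  move/existsNP: H => [x /not_implyP [Dx nxE]].
  apply: (IH (E + x)%MS); first exact: good_add.
  have hlt : (\rank E < \rank (E + x)%MS)%N.
    rewrite (ltn_leqif (mxrank_leqif_sup (addsmxSl E x))).
    apply/negP => sub; apply: nxE.
    exact: submx_trans (addsmxSr E x) sub.
  move: hk hlt; clear; lia.
apply: (key n 0 good0).
by rewrite leq_subr.
Qed.

End Proj.

Lemma part2 {R : realType} {n : nat} (qs : nat -> 'rV[R]_n -> \bar R) (q : 'rV[R]_n -> \bar R) (r : R) :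
  (forall k, is_gqf (qs k)) -> epi_converges qs q -> 0 <= r ->
  (\forall k \near \oo, forall w : 'rV[R]_n, (- (r * sqnorm w)%:E <= qs k w)%E) ->
  is_gqf q /\ forall w : 'rV[R]_n, (- (r * sqnorm w)%:E <= q w)%E.
Proof.
move=> Hg Hepi r0 Hlow.
split; last exact: (lowb qs q r Hepi Hlow).
have HD := Dsub qs q r Hg Hepi Hlow.
have [P [P1 P2]] := proj_exists _ HD.
pose G x := Qr q (x *m P).
have G3 : forall x y t, 0 <= t ->
    G (x + t *: y) + t * G (x - y) = (1 + t) * G x + t * (1 + t) * G y.
  move=> x y t t0; rewrite /G mulmxDl -scalemxAl mulmxBl.
  exact: (Deq qs q r Hg Hepi Hlow).
have [M [MT HM]] := G_quad _ G3.
exists (2%:R *: M), (D q); split; first by rewrite linearZ /= MT.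
split; first exact: HD.
apply: funext => x; case: (pselect (D q x)) => Dx.
  rewrite gqf_in // (QrE qs q r Hepi Hlow x Dx); congr EFin; rewrite /Fq /bil.
  rewrite -{1}(P1 x Dx) -/(G x) HM -scalemxAr -scalemxAl [X in _ = _ * X]mxE.
  by field.
rewrite gqf_out //.
by apply/eqP; apply/negPn/negP.
Qed.

Lemma incr_homo (f : nat -> nat) : increasing_seq f -> {homo f : k l / (k < l)%N >-> (k < l)%N}.
Proof. by move=> fI; apply: homo_ltn ltn_trans _ => m; have := (increasing_seqP f).2 fI m. Qed.

Lemma homo_ge (f : nat -> nat) : {homo f : k l / (k < l)%N >-> (k < l)%N} -> forall m, (m <= f m)%N.
Proof. by move=> fI; elim=> // m IH; apply: leq_ltn_trans IH (fI _ _ (ltnSn m)). Qed.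

Section Diag.
Context {R : realType}.
Variable v : nat -> nat -> R.
Hypothesis vb : forall j k, `|v j k| <= 1.

Let BW (g : nat -> nat) (j : nat) :
  exists2 f : nat -> nat, {homo f : k l / (k < l)%N >-> (k < l)%N} & cvgn (v j \o g \o f).
Proof.
have [f fI fc] := @bolzano_weierstrass R (v j \o g) ltac:(exists 1; split => // M M1 x _; exact: le_trans (vb _ _) (ltW M1)).
by exists f => //; exact: incr_homo.
Qed.

Let ext g j := projT1 (cid2 (BW g j)).
Let ext_homo g j : {homo ext g j : k l / (k < l)%N >-> (k < l)%N}.
Proof. by rewrite /ext; case: cid2. Qed.
Let ext_cvg g j : cvgn (v j \o g \o ext g j).
Proof. by rewrite /ext; case: cid2. Qed.

Fixpoint psi (j : nat) : nat -> nat :=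
  match j with 0 => ext id 0 | j'.+1 => psi j' \o ext (psi j') j'.+1 end.

Let psi_homo j : {homo psi j : k l / (k < l)%N >-> (k < l)%N}.
Proof.
elim: j => [|j IH] /=; first exact: ext_homo.
by move=> a b ab; apply: IH; apply: ext_homo.
Qed.

Let psi_cvg j : cvgn (v j \o psi j).
Proof. case: j => [|j] /=; [exact: (ext_cvg id 0) | exact: ext_cvg]. Qed.

Let psi_sub j d : exists tau : nat -> nat, (forall m, (m <= tau m)%N) /\
  forall m, psi (j + d) m = psi j (tau m).
Proof.
elim: d => [|d [tau [taug tauE]]]; first by exists id; split => // m; rewrite addn0.
exists (tau \o ext (psi (j + d)) (j + d).+1); split.
  move=> m /=; apply: leq_trans (taug _); exact: homo_ge (ext_homo _ _) m.
by move=> m; rewrite addnS /= tauE.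
Qed.

Definition phi k := psi k k.

Lemma phi_homo : {homo phi : k l / (k < l)%N >-> (k < l)%N}.
Proof.
apply: homo_ltn ltn_trans _ => k; rewrite /phi /=.
apply: psi_homo; exact: homo_ge (ext_homo _ _) k.+1.
Qed.

Lemma phi_cvg j : cvgn (v j \o phi).
Proof.
have := psi_cvg j; move/cvg_ex => [l hl]; apply/cvg_ex; exists l.
apply/cvgrPdist_lt => e e0.
have [N _ HN] := (cvgrPdist_lt _ _).1 hl e e0.
exists (N + j)%N => // k /= Nk.
have [tau [taug tauE]] := psi_sub j (k - j).
have -> : phi k = psi j (tau k).
  by rewrite /phi -tauE subnKC // (leq_trans (leq_addl N j) Nk).
apply: (HN (tau k)); apply: leq_trans (taug k).
exact: leq_trans (leq_addr j N) Nk.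
Qed.

End Diag.

Lemma diag_extract {R : realType} (v : nat -> nat -> R) : (forall j k, `|v j k| <= 1) ->
  exists phi : nat -> nat, {homo phi : k l / (k < l)%N >-> (k < l)%N} /\ forall j, cvgn (v j \o phi).
Proof. by move=> vb; exists (phi v vb); split; [exact: phi_homo | move=> j; exact: phi_cvg]. Qed.

Lemma rat_approx {R : realType} {n : nat} (x : 'rV[R]_n) (d : R) : 0 < d ->
  exists c : 'rV[rat]_n, `|x - map_mx ratr c| < d.
Proof.
move=> d0.
have H j : exists q : rat, `|x 0 j - ratr q| < d.
  have [q] := @rat_in_itvoo R (x 0 j - d) (x 0 j + d) ltac:(lra).
  rewrite in_itv /= => /andP [h1 h2]; exists q.
  rewrite ltr_norml; apply/andP; split; lra.
have [f Hf] := fin_all_exists H.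
exists (\row_j f j).
have -> : `|x - map_mx ratr (\row_j f j)| = mx_norm (x - map_mx ratr (\row_j f j)) by [].
rewrite mx_normrE; apply/bigmax_ltP; split => // -[i j] _ /=.
by rewrite !mxE (ord1 i).
Qed.

Lemma choose_seq (P : nat -> nat -> Prop) : (forall M, \forall k \near \oo, P M k) ->
  exists N : nat -> nat, (forall M, \forall k \near \oo, (M <= N k)%N) /\
     \forall k \near \oo, P (N k) k.
Proof.
move=> H.
have H' : forall M, exists K, forall k, (K <= k)%N -> P M k.
  by move=> M; have [K _ HK] := H M; exists K.
have [K0 HK0] := choice H'.
pose N k := \max_(M < k.+1 | (K0 M <= k)%N) (M : nat).
exists N; split.
  move=> M; exists (maxn M (K0 M)) => // k /=; rewrite geq_max => /andP [Mk Kk].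
  have Mk' : (M < k.+1)%N by rewrite ltnS.
  exact: (@leq_bigmax_cond _ (fun i : 'I_k.+1 => (K0 i <= k)%N) (fun i => nat_of_ord i) (Ordinal Mk')).
exists (K0 0%N) => // k /= Kk.
apply: HK0.
rewrite /N; apply: (big_ind (fun m => (K0 m <= k)%N)) => //.
by move=> a b ha hb; rewrite /maxn; case: ifP.
Qed.

Lemma inv_small {R : realType} (e : R) : 0 < e ->
  exists M : nat, forall N, (M <= N)%N -> (N.+1%:R)^-1 < e.
Proof.
move=> e0; exists (Num.Def.truncn (e^-1)) => N MN.
have h := truncnS_gt (e^-1).
have h2 : ((Num.Def.truncn e^-1).+1%:R : R) <= N.+1%:R by rewrite ler_nat ltnS.
rewrite invf_plt ?posrE //; exact: lt_le_trans h h2.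
Qed.

Lemma big_nat_ge {R : realType} (a : R) : exists M : nat, forall N, (M <= N)%N -> a <= N%:R.
Proof.
exists (Num.Def.truncn a).+1 => N MN.
apply: ltW; apply: lt_le_trans (truncnS_gt a) _; by rewrite ler_nat.
Qed.

Section PartI.
Context {R : realType} {n : nat}.
Local Notation V := 'rV[R]_n.
Variable qs : nat -> V -> \bar R.

Definition dec (j : nat) : option ('rV[rat]_n * nat) := unpickle j.
Definition ctr j : V := if dec j is Some p then map_mx ratr p.1 else 0.
Definition rad j : R := if dec j is Some p then (p.2.+1%:R)^-1 else 1.
Definition Bj j : set V := [set y | `|ctr j - y| < rad j].
Definition mm j k := ereal_inf (qs k @` Bj j).
Definition vv j k := contract (mm j k).

Lemma vv_b j k : `|vv j k| <= 1.
Proof. exact: contract_le1. Qed.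

Variable phi : nat -> nat.
Hypothesis phic : forall j, cvgn (vv j \o phi).

Definition cl j := limn (vv j \o phi).

Lemma cl_b j : `|cl j| <= 1.
Proof.
rewrite ler_norml; apply/andP; split.
  apply: limr_ge; first exact: phic.
  by apply: nearW => k /=; have := vv_b j (phi k); rewrite ler_norml => /andP[].
apply: limr_le; first exact: phic.
by apply: nearW => k /=; have := vv_b j (phi k); rewrite ler_norml => /andP[].
Qed.

Definition qlim (x : V) : \bar R := ereal_sup [set expand (cl j) | j in [set j | Bj j x]].

Lemma LI x xs : xs @ \oo --> x ->
  (qlim x <= limn_einf (fun k => qs (phi k) (xs k)))%E.
Proof.
move=> xsx; apply: ge_ereal_sup => _ [j Bjx <-].
apply: einf_ge => a ha.
have hc : contract a%:E < cl j by rewrite -lt_expandRL // inE cl_b.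
have e0 : 0 < cl j - contract a%:E by rewrite subr_gt0.
have [N1 _ H1] := (cvgrPdist_lt _ _).1 (phic j) _ e0.
have e1 : 0 < rad j - `|ctr j - x| by rewrite subr_gt0.
have [N2 _ H2] := (cvgrPdist_lt _ _).1 xsx _ e1.
exists (N1 + N2)%N => // k /= Nk.
have hv := H1 k (leq_trans (leq_addr _ _) Nk).
have hx := H2 k (leq_trans (leq_addl _ _) Nk).
have Bk : Bj j (xs k).
  rewrite /Bj /=; apply: le_lt_trans (ler_distD x _ _) _; lra.
move: hv; rewrite ltr_norml => /andP [hv1 hv2].
have E : (vv j \o phi) k = vv j (phi k) by [].
rewrite E in hv1 hv2.
have : contract a%:E < vv j (phi k) by move: hv2; rewrite ltrD2l ltrN2.
rewrite /vv lt_contract => ham.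
apply: ltW; apply: lt_le_trans ham _; apply: ereal_inf_lbound; by exists (xs k).
Qed.

Lemma LS x : exists2 xs : nat -> V, xs @ \oo --> x &
  (limn_esup (fun k => qs (phi k) (xs k)) <= qlim x)%E.
Proof.
have [qinf|qfin] := eqVneq (qlim x) +oo%E.
  by exists (fun=> x); [exact: cvg_cst | rewrite qinf leey].
have [T [T1 T2]] : exists T : nat -> R, (forall N, (qlim x < (T N)%:E)%E) /\
    (forall a : R, (qlim x < a%:E)%E -> exists M, forall N, (M <= N)%N -> T N <= a).
  move: qfin; case: (qlim x) => [r _| //|_].
    exists (fun N => r + (N.+1%:R)^-1); split.
      by move=> N; rewrite lte_fin ltrDl invr_gt0.
    move=> a; rewrite lte_fin => ra.
    have ar : 0 < a - r by rewrite subr_gt0.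
    have [M HM] := inv_small _ ar.
    exists M => N MN /=; have := HM N MN; move: (N.+1%:R^-1 : R) => z; lra.
  exists (fun N => - N%:R); split; first by move=> N; rewrite ltNyr.
  move=> a _; have [M HM] := big_nat_ge (- a).
  exists M => N MN /=; have := HM N MN; lra.
pose P N k := exists y, `|x - y| < (N.+1%:R)^-1 /\ (qs (phi k) y < (T N)%:E)%E.
have HP : forall N, \forall k \near \oo, P N k.
  move=> N.
  pose m := (2 * N + 1)%N.
  have s0 : (0 : R) < N.+1%:R by rewrite ltr0n.
  have hm : (m.+1%:R : R) = 2 * N.+1%:R.
    by rewrite -natrM; congr (_%:R); rewrite /m; lia.
  have [c hc] := rat_approx x (m.+1%:R^-1 : R) ltac:(by rewrite invr_gt0 ltr0n).
  pose j := pickle (c, m).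
  have dj : dec j = Some (c, m) by rewrite /dec /j pickleK.
  have cj : ctr j = map_mx ratr c by rewrite /ctr dj.
  have rj : rad j = (m.+1%:R)^-1 by rewrite /rad dj.
  have Bjx : Bj j x by rewrite /Bj /= cj rj distrC.
  have hsub : forall y, Bj j y -> `|x - y| < (N.+1%:R)^-1.
    move=> y; rewrite /Bj /= cj rj => hy.
    have hh : (m.+1%:R : R)^-1 + (m.+1%:R)^-1 = (N.+1%:R)^-1.
      by rewrite hm; field; rewrite ?pnatr_eq0.
    apply: le_lt_trans (ler_distD (map_mx ratr c) x y) _.
    move: hc hy hh; move: (m.+1%:R^-1 : R) (N.+1%:R^-1 : R) => z1 z2; lra.
  have hq : (expand (cl j) < (T N)%:E)%E.
    apply: le_lt_trans (T1 N); apply: ereal_sup_ubound; by exists j.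
  have hc' : cl j < contract (T N)%:E by rewrite -lt_expandLR // inE cl_b.
  have e0 : 0 < contract (T N)%:E - cl j by rewrite subr_gt0.
  have [K _ HK] := (cvgrPdist_lt _ _).1 (phic j) _ e0.
  exists K => // k /= Kk.
  have := HK k Kk; rewrite ltr_norml => /andP [h1 h2].
  have E : (vv j \o phi) k = vv j (phi k) by [].
  rewrite E in h1 h2.
  have : vv j (phi k) < contract (T N)%:E.
    by move: h1; rewrite opprB ltrD2l ltrN2.
  rewrite /vv lt_contract => /ereal_inf_lt [_ [y By <-] hy].
  by exists y; split => //; exact: hsub.
have [Nf [NfI NfP]] := choose_seq _ HP.
pose xs k := match pselect (P (Nf k) k) with
  | left h => projT1 (cid h) | right _ => x end.
have xsP : \forall k \near \oo, `|x - xs k| < ((Nf k).+1%:R)^-1 /\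
    (qs (phi k) (xs k) < (T (Nf k))%:E)%E.
  have [K _ HK] := NfP; exists K => // k /= Kk.
  rewrite /xs; case: pselect => [h|h]; last by have := HK k Kk.
  by case: cid => y /= [].
exists xs.
  apply/cvgrPdist_lt => e e0.
  have [M HM] := inv_small _ e0.
  have [K1 _ H1] := NfI M.
  have [K2 _ H2] := xsP.
  exists (K1 + K2)%N => // k /= Kk.
  have [h _] := H2 k (leq_trans (leq_addl _ _) Kk).
  exact: lt_trans h (HM _ (H1 k (leq_trans (leq_addr _ _) Kk))).
apply: esup_le => a ha.
have [M HM] := T2 a ha.
have [K1 _ H1] := NfI M.
have [K2 _ H2] := xsP.
exists (K1 + K2)%N => // k /= Kk.
have [_ h] := H2 k (leq_trans (leq_addl _ _) Kk).
apply: ltW; apply: lt_le_trans h _.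
by rewrite lee_fin; apply: HM; apply: H1; exact: leq_trans (leq_addr _ _) Kk.
Qed.

End PartI.

Lemma part1 {R : realType} {n : nat} (qs : nat -> 'rV[R]_n -> \bar R) :
  (forall k, is_gqf (qs k)) ->
  exists phi : nat -> nat,
    {homo phi : k l / (k < l)%N >-> (k < l)%N} /\
    exists q : 'rV[R]_n -> \bar R,
      epi_converges (fun k => qs (phi k)) q /\ exists w, q w != +oo%E.
Proof.
move=> Hg.
have [phi [phiI phic]] := diag_extract _ (vv_b qs).
exists phi; split => //.
exists (qlim qs phi); split.
  by move=> x; split; [move=> xs; exact: LI | exact: LS].
exists 0; apply/negP => /eqP h.
have cst0 : (fun=> (0 : 'rV[R]_n)) @ \oo --> (0 : 'rV[R]_n) by exact: cvg_cst.
have hl := LI qs phi phic 0 (fun=> 0) cst0.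
have h0 : (0%:E < qlim qs phi 0)%E by rewrite h ltry.
have [N _ HN] := einf_lt _ _ _ h0 hl.
have := HN N (leqnn N); rewrite /=.
have [A [L [_ [[L0 _] ->]]]] := Hg (phi N).
by rewrite gqf_in // Fq0 ltxx.
Qed.

Theorem proposition6p2 (R : realType) (n : nat) :
  (* (i) *)
  (forall qs : nat -> 'rV[R]_n -> \bar R,
     (forall k, is_gqf (qs k)) ->
     exists phi : nat -> nat,
       {homo phi : k l / (k < l)%N >-> (k < l)%N} /\
       exists q : 'rV[R]_n -> \bar R,
         epi_converges (fun k => qs (phi k)) q /\ exists w, q w != +oo%E) /\
  (* (ii) *)
  (forall (qs : nat -> 'rV[R]_n -> \bar R) (q : 'rV[R]_n -> \bar R) (r : R),
     (forall k, is_gqf (qs k)) ->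
     epi_converges qs q ->
     0 <= r ->
     (\forall k \near \oo, forall w : 'rV[R]_n, (- (r * sqnorm w)%:E <= qs k w)%E) ->
     is_gqf q /\ forall w : 'rV[R]_n, (- (r * sqnorm w)%:E <= q w)%E).
Proof.
split; first by move=> qs Hg; exact: part1.
by move=> qs q r Hg Hepi r0 Hlow; exact: part2.
Qed.
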